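(* Let $u>1$ be an integer, let $r=u+1$, and let $s\ge 2u+2$ be an integer. Let $x$ be a non-negative integer whose $r$-canonical representation is $[x]^r=\binom{n}{r}+\binom{m}{r-1}+\binom{2u-1}{r-2}$. Then for every integer $y$ with $\binom{n}{r}+\binom{m}{r-1}\le y\le x$, $$k_s(k_r\le y)=\binom{n}{s}+\binom{m}{s-1}.$$
   Context: All graphs are finite simple graphs. For a graph $g$ and an integer $r>1$, $k_r(g)$ denotes the number of subgraphs of $g$ isomorphic to the complete graph $K_r$. For $r<s$ and a non-negative integer $x$, $k_s(k_r\le x)$ denotes the maximum of $k_s(g)$ over all graphs $g$ with $k_r(g)\le x$. The $r$-canonical representation $[x]^r$ of a non-negative integer $x$ is obtained greedily: choose $a_r$ as large as possible with $\binom{a_r}{r}\le x$, then $a_{r-1}$ as large as possible with $\binom{a_{r-1}}{r-1}\le x-\binom{a_r}{r}$, and so on, until $x=\binom{a_r}{r}+\binom{a_{r-1}}{r-1}+\dots+\binom{a_{r-j}}{r-j}$; one has $a_r>a_{r-1}>\dots>a_{r-j}$. A binomial coefficient whose top entry is less than its bottom entry is taken to be $0$. *)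

(* Defs.v *)
From mathcomp Require Import all_boot.
Set Implicit Arguments. Unset Strict Implicit. Unset Printing Implicit Defensive.

Definition simple_graph (T : finType) (e : rel T) : Prop :=
  symmetric e /\ irreflexive e.

Definition clique (T : finType) (e : rel T) (A : {set T}) : bool :=
  [forall x in A, forall y in A, (x != y) ==> e x y].

(* k_r(g): number of subgraphs isomorphic to K_r, i.e. number of r-cliques. *)
Definition kcount (T : finType) (e : rel T) (r : nat) : nat :=
  #|[set A : {set T} | (#|A| == r) && clique e A]|.

(* "k_s(k_r <= x) = N": N is the maximum of k_s(g) over all finite simple
   graphs g with k_r(g) <= x (attained, and an upper bound). *)
Definition max_ks_kr_le (s r x N : nat) : Prop :=
  (exists (T : finType) (e : rel T),
      simple_graph e /\ kcount e r <= x /\ kcount e s = N) /\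
  (forall (T : finType) (e : rel T),
      simple_graph e -> kcount e r <= x -> kcount e s <= N).

(* greedy step: largest a with 'C(a, k) <= x (for x >= 1, k >= 1 such a
   exists and satisfies a <= x + k - 1, so searching a < x + k + 1 suffices). *)
Definition greedy_top (k x : nat) : nat :=
  last 0 [seq a <- iota 0 (x + k + 1) | 'C(a, k) <= x].

(* k-canonical representation of x: the list [a_k; a_(k-1); ...; a_(k-j)]
   of top entries, obtained greedily, stopping once the remainder is 0. *)
Fixpoint canon (k x : nat) : seq nat :=
  match k with
  | 0 => [::]
  | k'.+1 =>
      if x == 0 then [::]
      else let a := greedy_top k x in a :: canon k' (x - 'C(a, k))
  end.

(* Main.v *)
Require Import Defs.
From mathcomp Require Import all_boot.
From mathcomp Require Import zify.
Set Implicit Arguments. Unset Strict Implicit. Unset Printing Implicit Defensive.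


Fixpoint cas (k : nat) (A : seq nat) {struct A} : nat :=
  match A with
  | [::] => 0
  | a :: A' => 'C(a, k) + (if k is k'.+1 then cas k' A' else 0)
  end.

Fixpoint valid (k : nat) (A : seq nat) {struct A} : bool :=
  match A with
  | [::] => true
  | a :: A' => if k is k'.+1 then
      [&& k <= a, (if A' is b :: _ then (k' == 0) || (b < a) else true) & valid k' A']
      else true
  end.

Fixpoint fixB (k : nat) (A : seq nat) : seq nat :=
  match A with
  | [::] => [::]
  | a :: A' => if a <= k then [:: a] else a.-1 :: fixB k.-1 A'
  end.

Lemma cas0 A : cas 0 A <= 1.
Proof. by case: A => //= a A; rewrite bin0 addn0. Qed.

Lemma cas0_pred A : cas 0 (map predn A) = cas 0 A.
Proof. by case: A => //= a A; rewrite !bin0. Qed.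

Lemma valid_down k A : valid k.+1 A -> valid k A.
Proof.
elim: A k => //= a A IH k /and3P [ha hd hv].
case: k ha hd hv => // k ha hd hv.
apply/and3P; split; first by lia.
  by case: A IH hd hv => // b A _ /= hb _; rewrite hb orbT.
by apply: IH.
Qed.

Lemma valid_pred k A : valid k.+1 A -> valid k (map predn A).
Proof.
elim: A k => //= a A IH k /and3P [ha hd hv].
case: k ha hd hv => // k ha hd hv.
apply/and3P; split; first by lia.
  case: A IH hd hv => //= b A _ hb /and3P [hb' _ _].
  by apply/orP; right; lia.
by apply: IH.
Qed.

Lemma cas_pascal k A : valid k.+1 A ->
  cas k.+1 A = cas k.+1 (map predn A) + cas k (map predn A).
Proof.
elim: A k => //= a A IH k /and3P [ha hd hv].
case: a ha hd => // a ha hd /=.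
rewrite binS.
case: k ha hd hv => [|k] ha hd hv.
  by rewrite cas0_pred; lia.
rewrite (IH k hv); lia.
Qed.

Lemma cas_tight m X : valid m.+1 X -> (if X is b :: _ then b <= m.+1 else true) ->
  cas m (map predn X) <= m.+1.
Proof.
elim: X m => //= b X IH m /and3P [hb hd hv] hbm.
have -> : b = m.+1 by lia.
rewrite /= binn.
case: m hb hd hv hbm => [|m] hb hd hv hbm //.
have := IH m hv.
case: X IH hd hv => [|c X] IH hd hv /=.
  by move=> _; lia.
move=> H; have : cas m (map predn (c :: X)) <= m.+1.
  apply: H. move: hd => /orP [] //; lia.
by move=> /=; lia.
Qed.

Lemma fixB_spec l A : valid l.+1 A ->
  [/\ valid l.+1 (fixB l.+1 A),
      cas l.+1 (fixB l.+1 A) <= cas l.+1 (map predn A) + 1 &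
      cas l (map predn A) <= cas l (fixB l.+1 A)].
Proof.
elim: A l => [|a A IH] l; first by move=> _; split.
move=> /= /and3P [ha hd hv].
case: ifP => hal.
  have ea : a = l.+1 by lia.
  subst a; rewrite /= binn binSn; split.
  - by rewrite ltnSn.
  - by lia.
  - case: l ha hd hv hal => [|l] ha hd hv hal //=.
    have := @cas_tight l A hv.
    case: A IH hd hv => [|b A] IH hd hv /=.
      by move=> _; rewrite binn; lia.
    move=> H; have : cas l (map predn (b :: A)) <= l.+1.
      apply: H. move: hd => /orP [] //; lia.
    rewrite /= binn; lia.
case: l ha hd hv hal IH => [|l] ha hd hv hal IH.
  split => /=.
  - apply/and3P; split; [lia | by case: (fixB 0 A) | by case: (fixB 0 A)].
  - by have := cas0 (fixB 0 A); lia.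
  - by [].
have [IH1 IH2 IH3] := IH l hv.
split => /=.
- apply/and3P; split => //; first by lia.
  case: A IH hd hv IH1 IH2 IH3 => //= b A IH hd hv IH1 IH2 IH3.
  move: hv => /and3P [hbv _ _].
  case: ifP => hbl /=; lia.
- by lia.
- by lia.
Qed.

Lemma numeric k A f0 f1 s0 s1 : valid k.+2 A ->
  (forall B, valid k.+2 B -> cas k.+2 B <= f0 -> cas k.+1 B <= s0) ->
  (forall B, valid k.+1 B -> cas k.+1 B <= f1 -> cas k B <= s1) ->
  s0 <= f1 -> cas k.+2 A <= f0 + f1 -> cas k.+1 A <= f1 + s1.
Proof.
move=> hv IH0 IH1 hs hc.
have hv1 := valid_down hv.
rewrite (cas_pascal hv) in hc.
rewrite (cas_pascal hv1).
case: (leqP (cas k.+1 (map predn A)) f1) => h.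
  have := IH1 _ (valid_pred hv) h; lia.
have [B1 B2 B3] := fixB_spec hv.
have := IH0 _ B1 ltac:(lia); lia.
Qed.


Section Shift.
Variable T : finType.
Implicit Types (A B C D : {set T}) (F G : {set {set T}}).

Definition shadow F : {set {set T}} :=
  [set B : {set T} | [exists A in F, (B \subset A) && (#|B|.+1 == #|A|)]].

Lemma shadowP F B : reflect (exists2 A, A \in F & (B \subset A) /\ #|B|.+1 = #|A|)
  (B \in shadow F).
Proof.
rewrite inE; apply: (iffP existsP) => [[A /andP [hA /andP [h1 /eqP h2]]]|[A hA [h1 h2]]].
  by exists A.
by exists A; rewrite hA h1 h2 eqxx.
Qed.

Definition shA e x F A :=
  if [&& x \in A, e \notin A & e |: (A :\ x) \notin F] then e |: (A :\ x) else A.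
Definition shift e x F := [set shA e x F A | A in F].

Lemma setD1U1 e x A : x \in A -> e \notin A -> (e |: (A :\ x)) :\ e = A :\ x.
Proof.
move=> hx he; apply: setU1K; rewrite !inE negb_and he orbT //.
Qed.

Lemma shA_inj e x F : {in F &, injective (shA e x F)}.
Proof.
move=> A1 A2 h1 h2; rewrite /shA.
case: ifP => /and3P c1; case: ifP => /and3P c2.
- move=> E; case: c1 => x1 e1 _; case: c2 => x2 e2 _.
  have : A1 :\ x = A2 :\ x by rewrite -(setD1U1 x1 e1) E setD1U1.
  by move=> E2; rewrite -(setD1K x1) -(setD1K x2) E2.
- by move=> E; case: c1 => _ _; rewrite E h2.
- by move=> E; case: c2 => _ _; rewrite -E h1.
- by [].
Qed.

Lemma card_shift e x F : #|shift e x F| = #|F|.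
Proof. by rewrite card_in_imset //; apply: shA_inj. Qed.

Lemma card_U1D1 e x A : x \in A -> e \notin A -> #|e |: (A :\ x)| = #|A|.
Proof.
move=> hx he; rewrite cardsU1 !inE negb_and he orbT (cardsD1 x A) hx.
by rewrite add1n.
Qed.

Lemma shadow_shift e x F :
  shadow (shift e x F) \subset shift e x (shadow F).
Proof.
apply/subsetP => B /shadowP [A' /imsetP [A hA ->] [hBA hc]].
set G := shadow F.
rewrite /shA in hBA hc; move: hBA hc.
case: ifP => cond.
- case/and3P: cond => xA eA nF hBA hc.
  have exe : x != e by apply: contraNneq eA => <-.
  have xnA' : x \notin e |: (A :\ x) by rewrite !inE negb_or exe eqxx.
  case: (boolP (e \in B)) => eB.
  + pose C := x |: (B :\ e).
    have xnB : x \notin B by apply: contra xnA' => /(subsetP hBA).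
    have CA : C \subset A.
      apply/subsetP => y; rewrite !inE => /orP [/eqP -> //|/andP [ye yB]].
      by move: (subsetP hBA y yB); rewrite !inE (negbTE ye) /= => /andP [].
    have cC : #|C| = #|B|.
      by rewrite cardsU1 !inE (negbTE xnB) andbF /= (cardsD1 e B) eB.
    have CG : C \in G by apply/shadowP; exists A => //; split => //; rewrite cC hc card_U1D1.
    case: (boolP (B \in G)) => BG.
      apply/imsetP; exists B => //; rewrite /shA (negbTE xnB) //.
    apply/imsetP; exists C => //; rewrite /shA.
    have -> : e |: (C :\ x) = B.
      rewrite /C setU1K ?setD1K //.
      by rewrite !inE (negbTE xnB) andbF.
    rewrite BG !inE eqxx /= andbT.
    by rewrite eqxx /= eq_sym (negbTE exe).
  + have BA : B \subset A.
      apply/subsetP => y yB; move: (subsetP hBA y yB); rewrite !inE.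
      case/orP => [/eqP E|/andP [] //]; by rewrite -E yB in eB.
    have BG : B \in G by apply/shadowP; exists A => //; split => //; rewrite hc card_U1D1.
    apply/imsetP; exists B => //; rewrite /shA.
    have -> : x \in B = false.
      apply/negbTE; apply: contra xnA' => /(subsetP hBA) //.
    by [].
- move=> hBA hc.
  have BG : B \in G by apply/shadowP; exists A.
  apply/imsetP; exists B => //; rewrite /shA.
  case: ifP => // /and3P [xB eB nG]; exfalso.
  have xA : x \in A by apply: (subsetP hBA).
  case: (boolP (e \in A)) => eA.
  + have EB : B = A :\ e.
      apply/eqP; rewrite eqEcard; apply/andP; split.
        apply/subsetP => y yB; rewrite !inE (subsetP hBA y yB) andbT.
        by apply: contraNneq eB => <-.
      by move: hc; rewrite (cardsD1 e A) eA; lia.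
    move: nG; rewrite EB.
    have exe : e != x by apply: contraNneq eB => ->.
    have -> : e |: (A :\ e :\ x) = A :\ x.
      apply/setP => y; rewrite !inE; case: (eqVneq y e) => [->|ye] //=.
      by rewrite eA exe.
    apply/negP; rewrite negbK; apply/shadowP; exists A => //; split.
      by apply: subsetDl.
    by rewrite (cardsD1 x A) xA.
  + move: cond; rewrite xA eA /= => /negbFE AF.
    move/negP: nG; apply; apply/shadowP; exists (e |: (A :\ x)) => //; split.
      by apply: setUS; apply: setSD.
    by rewrite card_U1D1 // card_U1D1.
Qed.

Lemma card_shadow_shift e x F : #|shadow (shift e x F)| <= #|shadow F|.
Proof.
apply: leq_trans (subset_leq_card (shadow_shift e x F)) _.
by apply: leq_imset_card.
Qed.

End Shift.


Section Main.
Variable T : finType.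
Implicit Types (A B C D : {set T}) (F G : {set {set T}}).

Definition cnt e F := #|[set A in F | e \in A]|.

Lemma cnt_shift e x F A : A \in F -> x \in A -> e \notin A -> e |: (A :\ x) \notin F ->
  cnt e F < cnt e (shift e x F).
Proof.
move=> hA xA eA nF.
set A' := e |: (A :\ x).
have sub : A' |: [set B in F | e \in B] \subset [set B in shift e x F | e \in B].
  apply/subsetP => B; rewrite !inE => /orP [/eqP ->|/andP [BF eB]].
    rewrite /A' !inE eqxx andbT; apply/imsetP; exists A => //.
    by rewrite /shA xA eA nF.
  rewrite eB andbT; apply/imsetP; exists B => //.
  by rewrite /shA eB andbF.
apply: leq_trans (subset_leq_card sub); rewrite cardsU1 inE.
by rewrite (negbTE nF) /=.
Qed.

Definition unif k F := forall A, A \in F -> #|A| = k.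
Definition within D F := forall A, A \in F -> A \subset D.

Definition shiftedb e F :=
  [forall A in F, [forall x in A, (e \notin A) ==> (e |: (A :\ x) \in F)]].

Lemma unif_shift k e x F : unif k F -> unif k (shift e x F).
Proof.
move=> h B /imsetP [A hA ->]; rewrite /shA; case: ifP => [/and3P [xA eA _]|_].
  by rewrite card_U1D1 // h.
by apply: h.
Qed.

Lemma within_shift D e x F : e \in D -> within D F -> within D (shift e x F).
Proof.
move=> eD h B /imsetP [A hA ->]; rewrite /shA; case: ifP => _; last by apply: h.
apply/subsetP => y; rewrite !inE => /orP [/eqP -> //|/andP [_ yA]].
by apply: (subsetP (h A hA)).
Qed.

Lemma exists_shifted e D k F : e \in D -> within D F -> unif k F ->
  exists G, [/\ within D G, unif k G, #|G| = #|F|, #|shadow G| <= #|shadow F|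
              & shiftedb e G].
Proof.
move=> eD wF uF.
suff H : forall n G, #|F| - cnt e G <= n -> within D G -> unif k G -> #|G| = #|F| ->
   #|shadow G| <= #|shadow F| -> exists G', [/\ within D G', unif k G', #|G'| = #|F|,
     #|shadow G'| <= #|shadow F| & shiftedb e G'].
  by apply: (H _ F (leqnn _)).
elim => [|n IH] G hn wG uG cG sG.
- case: (boolP (shiftedb e G)) => hs; first by exists G.
  exfalso; move/forallPn: hs => [A]; rewrite negb_imply => /andP [hA /forallPn [x]].
  rewrite negb_imply => /andP [xA]; rewrite negb_imply => /andP [eA nF].
  have := cnt_shift hA xA eA nF.
  have : cnt e (shift e x G) <= #|shift e x G| by apply: subset_leq_card; apply/subsetP => B; rewrite inE => /andP [].
  rewrite card_shift; lia.
- case: (boolP (shiftedb e G)) => hs; first by exists G.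
  move/forallPn: hs => [A]; rewrite negb_imply => /andP [hA /forallPn [x]].
  rewrite negb_imply => /andP [xA]; rewrite negb_imply => /andP [eA nF].
  have := cnt_shift hA xA eA nF => hlt.
  apply: (IH (shift e x G)).
  + lia.
  + by apply: within_shift.
  + by apply: unif_shift.
  + by rewrite card_shift.
  + by apply: leq_trans (card_shadow_shift _ _ _) sG.
Qed.

End Main.


Lemma cas_empty k A : valid k.+1 A -> cas k.+1 A <= 0 -> cas k A = 0.
Proof.
case: A => //= a A /and3P [ha _ _]; have : 0 < 'C(a, k.+1) by rewrite bin_gt0.
lia.
Qed.

Section Main2.
Variable T : finType.
Implicit Types (A B C D : {set T}) (F G : {set {set T}}).

Theorem KK n : forall D k F (L : seq nat), #|D| <= n -> within D F -> unif k.+1 F ->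
  valid k.+1 L -> cas k.+1 L <= #|F| -> cas k L <= #|shadow F|.
Proof.
elim: n => [|n IH] D k F L hD wF uF vA hc;
  (case: (set_0Vmem F) => [F0|[A0 hA0]]; first by move: hc; rewrite F0 cards0 => hc; rewrite (cas_empty vA hc));
  have [e eA0] : exists e, e \in A0 by apply/card_gt0P; rewrite (uF _ hA0).
- have := subsetP (wF _ hA0) e eA0; move: hD; rewrite leqn0 cards_eq0 => /eqP ->.
  by rewrite inE.
have eD := subsetP (wF _ hA0) e eA0.
case: k uF vA hc => [|k] uF vA hc.
  apply: leq_trans (cas0 L) _; rewrite card_gt0; apply/set0Pn; exists set0.
  by apply/shadowP; exists A0 => //; split; [apply: sub0set | rewrite cards0 (uF _ hA0)].
have [G [wG uG cG sG shG]] := exists_shifted eD wF uF.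
apply: leq_trans sG; rewrite -cG in hc.
set F0 := [set B in G | e \notin B].
set F1 := [set B :\ e | B in [set B in G | e \in B]].
have cardG : #|G| = #|F0| + #|F1|.
  rewrite card_in_imset; last first.
    move=> B1 B2; rewrite !inE => /andP [_ h1] /andP [_ h2] E.
    by rewrite -(setD1K h1) -(setD1K h2) E.
  rewrite -(cardsID [set B : {set T} | e \in B] G) addnC.
  by congr (_ + _); apply: eq_card => B; rewrite !inE // andbC.
have hD' : #|D :\ e| <= n by move: hD; rewrite (cardsD1 e D) eD; lia.
have wF0 : within (D :\ e) F0.
  move=> B; rewrite inE => /andP [BG eB]; apply/subsetP => y yB; rewrite !inE.
  by rewrite (subsetP (wG _ BG) y yB) andbT; apply: contraNneq eB => <-.
have wF1 : within (D :\ e) F1.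
  move=> B /imsetP [B' hB' ->]; move: hB'; rewrite inE => /andP [B'G _].
  by apply: setSD; apply: wG.
have uF0 : unif k.+2 F0 by move=> B; rewrite inE => /andP [BG _]; apply: uG.
have uF1 : unif k.+1 F1.
  move=> B /imsetP [B' hB' ->]; move: hB'; rewrite inE => /andP [B'G eB'].
  by move: (uG _ B'G); rewrite (cardsD1 e B') eB'; lia.
have sub0 : shadow F0 \subset F1.
  apply/subsetP => B /shadowP [A1 hA1 [BA1 cB]].
  move: hA1; rewrite inE => /andP [A1G eA1].
  have [x [xA1 xB]] : exists x, x \in A1 /\ x \notin B.
    have : 0 < #|A1 :\: B| by rewrite cardsD (setIidPr BA1); lia.
    by case/card_gt0P => x; rewrite inE => /andP [h1 h2]; exists x.
  have EB : B = A1 :\ x.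
    apply/eqP; rewrite eqEcard; apply/andP; split.
      apply/subsetP => y yB; rewrite !inE (subsetP BA1 y yB) andbT.
      by apply: contraNneq xB => <-.
    by move: cB; rewrite (cardsD1 x A1) xA1; lia.
  apply/imsetP; exists (e |: (A1 :\ x)).
    rewrite inE setU11 andbT.
    by move/forallP: shG => /(_ A1); rewrite A1G /= => /forallP /(_ x); rewrite xA1 eA1.
  by rewrite EB setD1U1.
have ineq : #|F1| + #|shadow F1| <= #|shadow G|.
  have eF1 : forall B, B \in F1 -> e \notin B.
    by move=> B /imsetP [B' _ ->]; rewrite !inE eqxx.
  have eS1 : forall B, B \in shadow F1 -> e \notin B.
    move=> B /shadowP [A1 hA1 [BA1 _]]; apply: contra (eF1 _ hA1).
    by apply: (subsetP BA1).
  set S1 := [set e |: B | B in shadow F1].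
  have cS1 : #|S1| = #|shadow F1|.
    rewrite card_in_imset // => B1 B2 h1 h2 E.
    by rewrite -(setU1K (eS1 _ h1)) -(setU1K (eS1 _ h2)) E.
  have disj : F1 :&: S1 = set0.
    apply/setP => B; rewrite !inE; apply/negP => /andP [hB /imsetP [B' _ E]].
    by move: (eF1 _ hB); rewrite E setU11.
  have sub : F1 :|: S1 \subset shadow G.
    apply/subsetP => B; rewrite inE => /orP [hB|/imsetP [B' hB' ->]].
      move: hB => /imsetP [A1 hA1 ->]; move: hA1; rewrite inE => /andP [A1G eA1].
      apply/shadowP; exists A1 => //; split; first by apply: subsetDl.
      by rewrite (cardsD1 e A1) eA1.
    move: (eS1 _ hB') => eB'.
    move: hB' => /shadowP [A1 hA1 [BA1 cB]].
    move: hA1 => /imsetP [A2 hA2 EA1]; move: hA2; rewrite inE => /andP [A2G eA2].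
    apply/shadowP; exists A2 => //; split.
      apply/subsetP => y; rewrite !inE => /orP [/eqP -> //|yB].
      by move: (subsetP BA1 y yB); rewrite EA1 inE => /andP [].
    by rewrite cardsU1 eB' (cardsD1 e A2) eA2 -EA1 -cB.
  have := subset_leq_card sub; rewrite cardsU disj cards0 subn0 cS1.
  by [].
apply: leq_trans ineq.
rewrite cardG in hc.
apply: (numeric vA _ _ (subset_leq_card sub0) hc).
  by move=> B vB hB; apply: (IH (D :\ e)).
by move=> B vB hB; apply: (IH (D :\ e)).
Qed.
End Main2.


Section Iter.
Variable T : finType.
Implicit Types (A B C D : {set T}) (F G : {set {set T}}).

Lemma shadow_unif k F : unif k.+1 F -> unif k (shadow F).
Proof. by move=> h B /shadowP [A hA [_ c]]; move: (h A hA); rewrite -c => -[]. Qed.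

Lemma KKiter i : forall k F (L : seq nat), unif (i + k) F -> valid (i + k) L ->
  cas (i + k) L <= #|F| -> cas k L <= #|iter i (@shadow T) F|.
Proof.
elim: i => [|i IH] k F L uF vL hc //=.
rewrite -iterS iterSr.
apply: IH.
- by apply: shadow_unif.
- by apply: valid_down.
- apply: (@KK T #|[set: T]| setT) => //.
Qed.

Lemma shadow_mono F G : F \subset G -> shadow F \subset shadow G.
Proof.
move=> h; apply/subsetP => B /shadowP [A hA hB]; apply/shadowP; exists A => //.
by apply: (subsetP h).
Qed.

Variable e : rel T.
Definition cl k := [set A : {set T} | (#|A| == k) && clique e A].

Lemma kcountE k : kcount e k = #|cl k|.
Proof. by []. Qed.

Lemma clique_sub A B : B \subset A -> clique e A -> clique e B.
Proof.
move=> BA /forallP h; apply/forallP => x; apply/implyP => xB.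
move: (h x); rewrite (subsetP BA x xB) /= => /forallP h2.
apply/forallP => y; apply/implyP => yB.
by move: (h2 y); rewrite (subsetP BA y yB).
Qed.

Lemma shadow_cl k : shadow (cl k.+1) \subset cl k.
Proof.
apply/subsetP => B /shadowP [A]; rewrite !inE => /andP [/eqP cA clA] [BA cB].
rewrite (clique_sub BA clA) andbT; apply/eqP; move: cB; rewrite cA; lia.
Qed.

Lemma iter_cl i : forall k, iter i (@shadow T) (cl (i + k)) \subset cl k.
Proof.
elim: i => [|i IH] k //=.
apply: subset_trans (shadow_cl k).
apply: shadow_mono.
by have := IH k.+1; rewrite addnS.
Qed.

Lemma cl_unif k : unif k (cl k).
Proof. by move=> A; rewrite inE => /andP [/eqP]. Qed.

Lemma graph_KK r s (L : seq nat) : r <= s -> valid s L -> cas s L <= kcount e s ->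
  cas r L <= kcount e r.
Proof.
move=> rs vL hc.
have E : s = (s - r) + r by lia.
rewrite kcountE.
apply: leq_trans (subset_leq_card (iter_cl (s - r) r)).
apply: KKiter; rewrite -E //.
exact: cl_unif.
Qed.

End Iter.


Section Constr.
Variables n m : nat.
Hypothesis mn : m < n.
Definition V := 'I_n.+1.
Definition adj : rel V := fun i j => (i != j) && ((maxn i j < n) || (minn i j < m)).

Lemma adj_simple : simple_graph adj.
Proof.
split.
- by move=> i j; rewrite /adj eq_sym maxnC minnC.
- by move=> i; rewrite /adj eqxx.
Qed.

Lemma card_lt N k : k <= N -> #|[set i : 'I_N | i < k]| = k.
Proof.
move=> kN.
have -> : [set i : 'I_N | i < k] = [set widen_ord kN j | j : 'I_k].
  apply/setP => i; rewrite !inE; apply/idP/imsetP => [ik|[j _ ->]] //=.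
  by exists (Ordinal ik) => //; apply: val_inj.
by rewrite card_imset ?card_ord // => a b /(congr1 val) /= E; apply: val_inj.
Qed.

Definition P := [set i : V | i < n].
Definition Q := [set i : V | i < m].
Definition hub : V := ord_max.

Lemma cl_split k : cl adj k.+1 =
  [set A : {set V} | (A \subset P) && (#|A| == k.+1)] :|:
  [set hub |: B | B in [set B : {set V} | (B \subset Q) && (#|B| == k)]].
Proof.
apply/setP => A; rewrite !inE; apply/idP/idP.
- case/andP => /eqP cA /forallP clA.
  case: (boolP (hub \in A)) => hA.
  + apply/orP; right; apply/imsetP; exists (A :\ hub); last by rewrite setD1K.
    rewrite inE; apply/andP; split; last by move: cA; rewrite (cardsD1 hub A) hA add1n => -[->].
    apply/subsetP => y; rewrite !inE => /andP [yh yA].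
    move: (clA hub); rewrite hA /= => /forallP /(_ y); rewrite yA /= eq_sym yh /=.
    rewrite /adj /= eq_sym yh /=.
    have yn : (y : nat) <= n by have := ltn_ord y; lia.
    have yn' : (y : nat) != n by apply: contra yh => /eqP E; apply/eqP; apply: val_inj.
    rewrite (_ : maxn n y = n); last by lia.
    rewrite ltnn /= (_ : minn n y = y) //; lia.
  + apply/orP; left; rewrite cA eqxx andbT; apply/subsetP => y yA; rewrite inE.
    have : y != hub by apply: contraNneq hA => <-.
    have := ltn_ord y => h1 h2.
    have : (y : nat) != n by apply: contra h2 => /eqP E; apply/eqP; apply: val_inj.
    lia.
- case/orP => [/andP [AP /eqP cA]|/imsetP [B]].
  + rewrite cA eqxx /=; apply/forallP => x; apply/implyP => xA.
    apply/forallP => y; apply/implyP => yA; apply/implyP => xy.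
    rewrite /adj xy /=.
    move: (subsetP AP x xA) (subsetP AP y yA); rewrite !inE => h1 h2.
    by apply/orP; left; rewrite gtn_max h1 h2.
  + rewrite inE => /andP [BQ /eqP cB] ->.
    have hB : hub \notin B.
      apply/negP => /(subsetP BQ); rewrite inE /=; lia.
    rewrite cardsU1 hB cB eqxx /=.
    apply/forallP => x; apply/implyP => xA.
    apply/forallP => y; apply/implyP => yA; apply/implyP => xy.
    rewrite /adj xy /=.
    move: xA yA xy; rewrite !inE => /orP [/eqP ->|xB] /orP [/eqP ->|yB] xy.
    * by rewrite eqxx in xy.
    * move: (subsetP BQ y yB); rewrite inE /= => h; apply/orP; right; lia.
    * move: (subsetP BQ x xB); rewrite inE /= => h; apply/orP; right; lia.
    * move: (subsetP BQ x xB) (subsetP BQ y yB); rewrite !inE => h1 h2.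
      apply/orP; right; lia.
Qed.

Lemma kcount_constr k : kcount adj k.+1 = 'C(n, k.+1) + 'C(m, k).
Proof.
rewrite kcountE cl_split cardsU.
have -> : [set A : {set V} | (A \subset P) & #|A| == k.+1] :&:
   [set hub |: B | B in [set B : {set V} | (B \subset Q) && (#|B| == k)]] = set0.
  apply/setP => A; rewrite !inE; apply/negP => /andP [/andP [AP _] /imsetP [B _ E]].
  by move: (subsetP AP hub); rewrite E setU11 inE /= ltnn => /(_ isT).
rewrite cards0 subn0 cards_draws /P card_lt; last by lia.
rewrite card_in_imset.
  by rewrite cards_draws /Q card_lt //; lia.
move=> B1 B2; rewrite !inE => /andP [h1 _] /andP [h2 _] E.
have n1 : hub \notin B1 by apply/negP => /(subsetP h1); rewrite inE /=; lia.
have n2 : hub \notin B2 by apply/negP => /(subsetP h2); rewrite inE /=; lia.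
by rewrite -(setU1K n1) -(setU1K n2) E.
Qed.

End Constr.


Definition lf (p : pred nat) N := last 0 [seq a <- iota 0 N | p a].

Lemma last_filter_iota (p : pred nat) N : p 0 -> 0 < N ->
  [/\ p (lf p N), lf p N < N & forall a, lf p N < a < N -> ~~ p a].
Proof.
move=> p0; elim: N => [//|N IH] _.
rewrite /lf -addn1 iotaD filter_cat last_cat add0n /=.
case: N IH => [|N] IH.
  by rewrite /= p0 /=; split => // a; lia.
have [h1 h2 h3] := IH isT.
rewrite -/(lf p N.+1).
case: ifP => pN /=.
  by split => //; [lia | move=> a; lia].
split => //; first by lia.
move=> a ha; case: (ltnP a N.+1) => hlt.
  by apply: h3; lia.
have -> : a = N.+1 by lia.
by rewrite pN.
Qed.

Lemma bin_big x k : 0 < k -> x < 'C(x + k, k).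
Proof.
case: k => // k _; elim: k => [|k IH]; first by rewrite addn1 bin1.
rewrite addnS binS; lia.
Qed.

Lemma greedy_spec k x : 0 < k -> 0 < x ->
  'C(greedy_top k x, k) <= x /\ x < 'C((greedy_top k x).+1, k).
Proof.
move=> k0 x0; rewrite /greedy_top.
have p0 : 'C(0, k) <= x by rewrite bin0n; case: k k0.
have [h1 h2 h3] := @last_filter_iota (fun a => 'C(a, k) <= x) (x + k + 1) p0 ltac:(lia).
rewrite -/(lf _ _).
split => //.
set g := lf _ _ in h1 h2 h3 *.
case: (ltnP g.+1 (x + k + 1)) => hg.
  by have := h3 g.+1; rewrite ltnSn hg /=; rewrite ltnNge => /(_ isT).
have -> : g.+1 = x + k + 1 by lia.
apply: leq_trans (bin_big x k0) _; apply: leq_bin2l; lia.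
Qed.

Lemma canon_facts u x n m : 1 < u ->
  canon u.+1 x = [:: n; m; (2 * u - 1)%N] ->
  [/\ x = 'C(n, u.+1) + 'C(m, u) + 'C(2 * u - 1, u.-1) & m < n].
Proof.
case: u => [|[|w]] // _.
rewrite /=.
case: eqP => // /eqP x0 [En].
set x1 := x - _.
case: eqP => // /eqP x1n [Em].
set x2 := x1 - _.
case: eqP => // /eqP x2n [Ec].
set x3 := x2 - _.
move=> E3.
have [g1 g1'] := greedy_spec (isT : 0 < w.+3) (ltac:(lia) : 0 < x).
have [g2 g2'] := greedy_spec (isT : 0 < w.+2) (ltac:(lia) : 0 < x1).
have [g3 g3'] := greedy_spec (isT : 0 < w.+1) (ltac:(lia) : 0 < x2).
rewrite En in g1 g1'; rewrite Em in g2 g2'; rewrite Ec in g3 g3'.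
have e1 : x1 = x - 'C(n, w.+3) by rewrite /x1 En.
have e2 : x2 = x1 - 'C(m, w.+2) by rewrite /x2 Em.
have e3 : x3 = x2 - 'C(2 * w.+2 - 1, w.+1) by rewrite /x3 Ec.
clearbody x1 x2 x3; clear En Em Ec.
have x3z : x3 = 0.
  case: w E3 g1 g1' g2 g2' g3 g3' e1 e2 e3 => [|w] E3 g1 g1' g2 g2' g3 g3' e1 e2 e3.
    move: g3 g3' e3; rewrite !bin1 => ???; lia.
  by move: E3 => /=; case: eqP.
split; first by lia.
rewrite ltnNge; apply/negP => hnm.
have := leq_bin2l w.+2 hnm.
move: g1'; rewrite binS; lia.
Qed.



Theorem corollary1 (u s x n m : nat) :
  1 < u -> 2 * u + 2 <= s ->
  canon u.+1 x = [:: n; m; (2 * u - 1)%N] ->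
  forall y : nat, 'C(n, u.+1) + 'C(m, u) <= y -> y <= x ->
    max_ks_kr_le s u.+1 y ('C(n, s) + 'C(m, s - 1)).
Proof.
move=> hu hs hc y hy1 hy2.
have [hx mn] := canon_facts hu hc.
have [w Ew] : exists w, u = w.+2 by exists (u - 2); lia.
have [t Et] : exists t, s = t.+3 by exists (s - 3); lia.
subst u s.
have E : 2 * w.+2 - 1 = w.*2.+3 by lia.
rewrite E /= in hx.
have Es : t.+3 - 1 = t.+2 by lia.
rewrite Es.
split.
  exists (V n), (@adj n m); split; first exact: adj_simple.
  by rewrite !(kcount_constr mn).
move=> T e _ hk.
rewrite leqNgt; apply/negP => hlt.
have b1 : 'C(w.*2.+3, w.+1) < 'C(w.*2.+4, w.+1).
  have h0 : 0 < 'C(w.*2.+3, w) by rewrite bin_gt0; lia.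
  by rewrite (binS w.*2.+3); lia.
case: (leqP t.+3 n) => hn.
  case: (leqP t.+2 m) => hm.
    have vL : valid t.+3 [:: n; m; t.+1].
      by rewrite /= hn hm mn ltnSn.
    have hcas : cas t.+3 [:: n; m; t.+1] <= kcount e t.+3 by rewrite /= binn; lia.
    have := graph_KK (ltac:(lia) : w.+3 <= t.+3) vL hcas; rewrite /=.
    have : 'C(w.*2.+4, w.+1) <= 'C(t.+1, w.+1) by apply: leq_bin2l; lia.
    lia.
  have vL : valid t.+3 [:: n; t.+2].
    by rewrite /= hn ?ltnSn.
  have hcas : cas t.+3 [:: n; t.+2] <= kcount e t.+3.
    by move: hlt; rewrite /= binn (bin_small hm); lia.
  have := graph_KK (ltac:(lia) : w.+3 <= t.+3) vL hcas; rewrite /= binS.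
  have : 'C(w.*2.+4, w.+1) <= 'C(t.+1, w.+1) by apply: leq_bin2l; lia.
  have : 'C(m, w.+2) <= 'C(t.+1, w.+2) by apply: leq_bin2l; lia.
  lia.
have vL : valid t.+3 [:: t.+3] by rewrite /= ltnSn.
have hcas : cas t.+3 [:: t.+3] <= kcount e t.+3.
  by move: hlt; rewrite /= binn (bin_small hn) (@bin_small m); lia.
have := graph_KK (ltac:(lia) : w.+3 <= t.+3) vL hcas; rewrite /= (binS t.+2 w.+2) (binS t.+1 w.+1) (binS t w).
have : 'C(n, w.+3) <= 'C(t.+2, w.+3) by apply: leq_bin2l; lia.
have : 'C(m, w.+2) <= 'C(t.+1, w.+2) by apply: leq_bin2l; lia.
have : 'C(w.*2.+3, w.+1) <= 'C(t, w.+1) by apply: leq_bin2l; lia.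
have : 0 < 'C(t, w) by rewrite bin_gt0; lia.
lia.
Qed.
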